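(* Let $c\ge 0$, $m\ge 2$, and let $x=((x^1,n_1),\dots,(x^q,n_q))$ be a non-convergent Nash equilibrium of the best-worst rule $s=(c,m)$. If $n_i=n_j=2$, $k$ is a candidate located at $x^i$ and $l$ is a candidate located at $x^j$, then $v_k(x)=v_l(x)$.
   Context: Setting: voters' ideal points are distributed uniformly (unit mass, Lebesgue measure) on $[0,1]$. There are $m$ candidates; a profile is $x=(x_1,\dots,x_m)\in[0,1]^m$. A voter with ideal point $y$ ranks candidates by distance $|x_i-y|$ (closer is better); ties are broken by a fair lottery (uniformly random strict order among tied candidates). Under the best-worst rule $s=(c,m)$ ($c\ge0$), a candidate receives $1$ point from each voter ranking her first, $-c$ from each voter ranking her last ($m$-th), and $0$ otherwise; $v_i(x)$ is candidate $i$'s expected total points. A (pure-strategy Nash) equilibrium is a profile $x^*$ with $v_i(x^* )\ge v_i(t,x^*_{-i})$ for all $i$ and $t\in[0,1]$ ($(t,x_{-i})$ is $x$ with $x_i$ replaced by $t$); it is non-convergent if at least two platforms are distinct. A profile determines its distinct occupied positions $x^1<\dots<x^q$, with $n_j$ the number of candidates at $x^j$; we write $x=((x^1,n_1),\dots,(x^q,n_q))$. *)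

(* Defs.v *)
From Stdlib Require Import Reals Lra Lia List Classical ClassicalEpsilon.
Import ListNotations.
Open Scope R_scope.

(* A profile of m candidates is x : nat -> R, candidate j (0 <= j < m) at x j. *)

Definition dist (x : nat -> R) (j : nat) (y : R) : R := Rabs (x j - y).

Definition closest_b (m : nat) (x : nat -> R) (y : R) (j : nat) : bool :=
  forallb (fun k => if Rle_dec (dist x j y) (dist x k y) then true else false)
          (seq 0 m).

Definition farthest_b (m : nat) (x : nat -> R) (y : R) (j : nat) : bool :=
  forallb (fun k => if Rle_dec (dist x k y) (dist x j y) then true else false)
          (seq 0 m).

Definition n_closest (m : nat) (x : nat -> R) (y : R) : nat :=
  length (filter (closest_b m x y) (seq 0 m)).

Definition n_farthest (m : nat) (x : nat -> R) (y : R) : nat :=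
  length (filter (farthest_b m x y) (seq 0 m)).

(* Expected points candidate i receives from voter y under the best-worst rule
   (c,m) with fair-lottery tie breaking: probability of being ranked first is
   1/#(tied closest) if i is among the closest, probability of being ranked last
   is 1/#(tied farthest) if i is among the farthest. *)
Definition score (c : R) (m : nat) (x : nat -> R) (i : nat) (y : R) : R :=
  (if closest_b m x y i then / INR (n_closest m x y) else 0)
  - c * (if farthest_b m x y i then / INR (n_farthest m x y) else 0).

(* Riemann integral over [0,1] (the value of the integral when f is integrable;
   all score functions are step functions, hence integrable). *)
Definition integral01 (f : R -> R) : R :=
  epsilon (inhabits 0)
    (fun l => exists pr : Riemann_integrable f 0 1, RiemannInt pr = l).

(* v_i(x): expected total points of candidate i, voters uniform on [0,1]. *)
Definition v (c : R) (m : nat) (x : nat -> R) (i : nat) : R :=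
  integral01 (score c m x i).

Definition update (x : nat -> R) (i : nat) (t : R) : nat -> R :=
  fun j => if Nat.eq_dec j i then t else x j.

Definition is_profile (m : nat) (x : nat -> R) : Prop :=
  forall j, (j < m)%nat -> 0 <= x j <= 1.

Definition nash_eq (c : R) (m : nat) (x : nat -> R) : Prop :=
  is_profile m x /\
  forall i, (i < m)%nat -> forall t, 0 <= t <= 1 ->
    v c m (update x i t) i <= v c m x i.

Definition non_convergent (m : nat) (x : nat -> R) : Prop :=
  exists i j, (i < m)%nat /\ (j < m)%nat /\ x i <> x j.

Definition mult (m : nat) (x : nat -> R) (p : R) : nat :=
  length (filter (fun j => if Req_EM_T (x j) p then true else false) (seq 0 m)).

(* Main.v *)
Require Import Defs.
From Stdlib Require Import Reals.
Open Scope R_scope.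
From Stdlib Require Import Lra Lia List Classical ClassicalEpsilon FunctionalExtensionality.
Import ListNotations.
Open Scope R_scope.

Lemma step_base (f : R -> R) (a b : R) : a <= b ->
  (forall y, a < y < b -> f y = f ((a+b)/2)) -> Riemann_integrable f a b.
Proof.
  intros Hab Hc.
  assert (IS : IsStepFun f a b).
  { exists [a;b]. exists [f ((a+b)/2)].
    repeat split.
    - intros i Hi. simpl in Hi. destruct i; [simpl; lra | lia].
    - simpl. unfold Rmin. destruct (Rle_dec a b); lra.
    - simpl. unfold Rmax. destruct (Rle_dec a b); lra.
    - intros i Hi. simpl in Hi. destruct i; [|lia].
      simpl. intros y Hy. unfold open_interval in Hy. apply Hc; exact Hy. }
  intro eps.
  exists (mkStepFun IS).
  exists (mkStepFun (StepFun_P4 a b 0)).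
  split.
  - intros t _. simpl. unfold fct_cte. rewrite Rminus_diag, Rabs_R0. lra.
  - rewrite StepFun_P18. rewrite Rmult_0_l, Rabs_R0. apply cond_pos.
Qed.

Lemma step_int (f : R -> R) (L : list R) : forall a b, a <= b ->
  (forall u v, a <= u -> u < v -> v <= b -> (forall z, In z L -> ~ (u < z < v)) ->
     forall y, u < y < v -> f y = f ((u+v)/2)) -> Riemann_integrable f a b.
Proof.
  induction L as [|z L IH]; intros a b Hab H.
  - apply step_base; auto.
    intros y Hy. apply (H a b); try lra. intros z Hz; destruct Hz.
  - destruct (Rlt_dec a z) as [Haz|Haz]; [destruct (Rlt_dec z b) as [Hzb|Hzb]|].
    + apply RiemannInt_P24 with z.
      * apply IH; [lra|]. intros u v Hu Huv Hv Hz y Hy. apply H; try lra.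
        intros z' [<-|Hz']; [lra|]. apply Hz; auto.
      * apply IH; [lra|]. intros u v Hu Huv Hv Hz y Hy. apply H; try lra.
        intros z' [<-|Hz']; [lra|]. apply Hz; auto.
    + apply IH; auto. intros u v Hu Huv Hv Hz y Hy. apply H; try lra.
      intros z' [<-|Hz']; [lra|]. apply Hz; auto.
    + apply IH; auto. intros u v Hu Huv Hv Hz y Hy. apply H; try lra.
      intros z' [<-|Hz']; [lra|]. apply Hz; auto.
Qed.

Lemma integral01_eq (f : R -> R) (pr : Riemann_integrable f 0 1) :
  integral01 f = RiemannInt pr.
Proof.
  unfold integral01.
  assert (Hex : exists l, exists pr : Riemann_integrable f 0 1, RiemannInt pr = l)
    by (exists (RiemannInt pr); exists pr; reflexivity).
  destruct (epsilon_spec (inhabits 0) _ Hex) as [pr' Hpr'].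
  rewrite <- Hpr'. apply RiemannInt_P5.
Qed.


Lemma closest_spec m x y j :
  closest_b m x y j = true <-> forall t, (t < m)%nat -> Defs.dist x j y <= Defs.dist x t y.
Proof.
  unfold closest_b. rewrite forallb_forall. split.
  - intros H t Ht. specialize (H t). rewrite in_seq in H.
    destruct (Rle_dec (Defs.dist x j y) (Defs.dist x t y)); auto.
    discriminate (H ltac:(lia)).
  - intros H t Ht. rewrite in_seq in Ht.
    destruct (Rle_dec (Defs.dist x j y) (Defs.dist x t y)); auto.
    exfalso; apply n, H; lia.
Qed.

Lemma farthest_spec m x y j :
  farthest_b m x y j = true <-> forall t, (t < m)%nat -> Defs.dist x t y <= Defs.dist x j y.
Proof.
  unfold farthest_b. rewrite forallb_forall. split.
  - intros H t Ht. specialize (H t). rewrite in_seq in H.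
    destruct (Rle_dec (Defs.dist x t y) (Defs.dist x j y)); auto.
    discriminate (H ltac:(lia)).
  - intros H t Ht. rewrite in_seq in Ht.
    destruct (Rle_dec (Defs.dist x t y) (Defs.dist x j y)); auto.
    exfalso; apply n, H; lia.
Qed.

Lemma cnt_le (f g : nat -> bool) m :
  (forall t, (t < m)%nat -> f t = true -> g t = true) ->
  (length (filter f (seq 0 m)) <= length (filter g (seq 0 m)))%nat.
Proof.
  intros H. apply NoDup_incl_length.
  - apply NoDup_filter, seq_NoDup.
  - intros t Ht. apply filter_In in Ht as [Ht1 Ht2]. apply filter_In. split; auto.
    apply in_seq in Ht1. apply H; auto; lia.
Qed.

Lemma cnt_le1 (f : nat -> bool) m k :
  (forall t, (t < m)%nat -> f t = true -> t = k) ->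
  (length (filter f (seq 0 m)) <= 1)%nat.
Proof.
  intros H. change 1%nat with (length [k]). apply NoDup_incl_length.
  - apply NoDup_filter, seq_NoDup.
  - intros t Ht. apply filter_In in Ht as [Ht1 Ht2]. apply in_seq in Ht1.
    left. symmetry. apply H; auto; lia.
Qed.

Lemma cnt_ge1 (f : nat -> bool) m i :
  (i < m)%nat -> f i = true -> (1 <= length (filter f (seq 0 m)))%nat.
Proof.
  intros Hi Hf. change 1%nat with (length [i]). apply NoDup_incl_length.
  - constructor; [intros []|constructor].
  - intros t [<-|[]]. apply filter_In. split; auto. apply in_seq; lia.
Qed.

Lemma cnt_ge2 (f : nat -> bool) m i j :
  (i < m)%nat -> (j < m)%nat -> i <> j -> f i = true -> f j = true ->
  (2 <= length (filter f (seq 0 m)))%nat.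
Proof.
  intros Hi Hj Hij Hfi Hfj. change 2%nat with (length [i;j]). apply NoDup_incl_length.
  - constructor; [intros [<-|[]]; auto|constructor; [intros []|constructor]].
  - intros t [<-|[<-|[]]]; apply filter_In; split; auto; apply in_seq; lia.
Qed.

Lemma partner m x z j : mult m x z = 2%nat -> (j < m)%nat -> x j = z ->
  exists j', (j' < m)%nat /\ j' <> j /\ x j' = z.
Proof.
  intros Hm Hj Hx. apply NNPP. intros Hn.
  assert (length (filter (fun t => if Req_EM_T (x t) z then true else false) (seq 0 m)) <= 1)%nat.
  { apply cnt_le1 with j. intros t Ht Hf.
    destruct (Req_EM_T (x t) z); [|discriminate].
    destruct (Nat.eq_dec t j); auto. exfalso; apply Hn; exists t; auto. }
  unfold mult in Hm. lia.
Qed.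

Lemma nc_pos m x y i : (i < m)%nat -> closest_b m x y i = true -> (1 <= n_closest m x y)%nat.
Proof. intros. unfold n_closest. eapply cnt_ge1; eauto. Qed.
Lemma nf_pos m x y i : (i < m)%nat -> farthest_b m x y i = true -> (1 <= n_farthest m x y)%nat.
Proof. intros. unfold n_farthest. eapply cnt_ge1; eauto. Qed.

Lemma inv_le1 n : (1 <= n)%nat -> 0 < / INR n <= 1.
Proof.
  intros H. apply le_INR in H. simpl in H. split.
  - apply Rinv_0_lt_compat; lra.
  - rewrite <- Rinv_1. apply Rinv_le_contravar; lra.
Qed.

Lemma first_bounds (c:R) m x y i : (i < m)%nat ->
  0 <= (if closest_b m x y i then / INR (n_closest m x y) else 0) <= 1.
Proof.
  intros Hi. destruct (closest_b m x y i) eqn:E; [|lra].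
  pose proof (inv_le1 _ (nc_pos m x y i Hi E)); lra.
Qed.

Lemma pen_bounds (c:R) m x y i : (i < m)%nat ->
  0 <= (if farthest_b m x y i then / INR (n_farthest m x y) else 0) <= 1.
Proof.
  intros Hi. destruct (farthest_b m x y i) eqn:E; [|lra].
  pose proof (inv_le1 _ (nf_pos m x y i Hi E)); lra.
Qed.

Lemma score_le1 c m x y i : 0 <= c -> (i < m)%nat -> score c m x i y <= 1.
Proof.
  intros Hc Hi. unfold score. pose proof (first_bounds c m x y i Hi).
  pose proof (pen_bounds c m x y i Hi). nra.
Qed.

Lemma score_gec c m x y i : 0 <= c -> (i < m)%nat -> - c <= score c m x i y.
Proof.
  intros Hc Hi. unfold score. pose proof (first_bounds c m x y i Hi).
  pose proof (pen_bounds c m x y i Hi). nra.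
Qed.

Lemma score_ge0 c m x y i : 0 <= c -> (i < m)%nat ->
  (exists t, (t < m)%nat /\ Defs.dist x i y < Defs.dist x t y) -> 0 <= score c m x i y.
Proof.
  intros Hc Hi [t [Ht Hd]]. unfold score.
  assert (farthest_b m x y i = false).
  { destruct (farthest_b m x y i) eqn:E; auto. rewrite farthest_spec in E.
    specialize (E t Ht). lra. }
  rewrite H. pose proof (first_bounds c m x y i Hi). lra.
Qed.

Lemma score_le0 c m x y i : 0 <= c -> (i < m)%nat ->
  (exists t, (t < m)%nat /\ Defs.dist x t y < Defs.dist x i y) -> score c m x i y <= 0.
Proof.
  intros Hc Hi [t [Ht Hd]]. unfold score.
  assert (closest_b m x y i = false).
  { destruct (closest_b m x y i) eqn:E; auto. rewrite closest_spec in E.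
    specialize (E t Ht). lra. }
  rewrite H. pose proof (pen_bounds c m x y i Hi). nra.
Qed.

Lemma score_le_half c m x y i i' : 0 <= c -> (i < m)%nat -> (i' < m)%nat -> i <> i' ->
  x i' = x i -> closest_b m x y i = true -> score c m x i y <= / 2.
Proof.
  intros Hc Hi Hi' Hii Hx Hcl. unfold score.
  assert (closest_b m x y i' = true).
  { rewrite closest_spec in *. intros t Ht. unfold Defs.dist in *. rewrite Hx. auto. }
  assert (H2 : (2 <= n_closest m x y)%nat) by (unfold n_closest; apply (cnt_ge2 _ m i i'); auto).
  rewrite Hcl. pose proof (pen_bounds c m x y i Hi).
  apply le_INR in H2. simpl in H2.
  assert (/ INR (n_closest m x y) <= / 2) by (apply Rinv_le_contravar; lra).
  nra.
Qed.

Lemma score_le_mhalf c m x y i : 0 <= c -> (i < m)%nat -> mult m x (x i) = 2%nat ->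
  (exists t, (t < m)%nat /\ Defs.dist x t y < Defs.dist x i y) ->
  (forall t, (t < m)%nat -> x t <> x i -> Defs.dist x t y < Defs.dist x i y) ->
  score c m x i y <= - c / 2.
Proof.
  intros Hc Hi Hm Hex Hall.
  assert (E0 : closest_b m x y i = false).
  { destruct Hex as [t [Ht Hd]].
    destruct (closest_b m x y i) eqn:E; auto. rewrite closest_spec in E.
    specialize (E t Ht). lra. }
  assert (E1 : farthest_b m x y i = true).
  { apply farthest_spec. intros t Ht. destruct (Req_EM_T (x t) (x i)) as [e|n].
    - unfold Defs.dist. rewrite e. lra.
    - apply Rlt_le, Hall; auto. }
  unfold score. rewrite E0, E1.
  assert (H2 : (n_farthest m x y <= 2)%nat).
  { rewrite <- Hm. unfold n_farthest, mult. apply cnt_le.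
    intros t Ht Hf. destruct (Req_EM_T (x t) (x i)); auto.
    rewrite farthest_spec in Hf. specialize (Hf i Hi). specialize (Hall t Ht n). lra. }
  pose proof (nf_pos m x y i Hi E1).
  apply le_INR in H2. apply le_INR in H. simpl in H, H2.
  assert (/ 2 <= / INR (n_farthest m x y)) by (apply Rinv_le_contravar; lra).
  nra.
Qed.

Lemma score_ge1 c m x y i : 0 <= c -> (i < m)%nat ->
  (forall t, (t < m)%nat -> t <> i -> Defs.dist x i y < Defs.dist x t y) ->
  (exists t, (t < m)%nat /\ Defs.dist x i y < Defs.dist x t y) ->
  1 <= score c m x i y.
Proof.
  intros Hc Hi Hall Hex.
  assert (E0 : farthest_b m x y i = false).
  { destruct Hex as [t [Ht Hd]].
    destruct (farthest_b m x y i) eqn:E; auto. rewrite farthest_spec in E.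
    specialize (E t Ht). lra. }
  assert (E1 : closest_b m x y i = true).
  { apply closest_spec. intros t Ht. destruct (Nat.eq_dec t i) as [->|n]; [lra|].
    apply Rlt_le, Hall; auto. }
  unfold score. rewrite E0, E1.
  assert (H1 : (n_closest m x y <= 1)%nat).
  { unfold n_closest. apply cnt_le1 with i. intros t Ht Hf.
    destruct (Nat.eq_dec t i); auto. rewrite closest_spec in Hf.
    specialize (Hf i Hi). specialize (Hall t Ht n). lra. }
  pose proof (nc_pos m x y i Hi E1).
  assert (n_closest m x y = 1%nat) by lia. rewrite H0. simpl. rewrite Rinv_1. lra.
Qed.


Lemma cmp_const (xa xb u v y y' : R) :
  ~ (u < (xa + xb)/2 < v) -> u < y < v -> u < y' < v ->
  (Rabs (xa - y) <= Rabs (xb - y) <-> Rabs (xa - y') <= Rabs (xb - y')).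
Proof.
  intros Hm Hy Hy'.
  assert (H : (xa + xb)/2 <= u \/ v <= (xa+xb)/2).
  { destruct (Rle_or_lt ((xa + xb)/2) u); auto. destruct (Rle_or_lt v ((xa + xb)/2)); auto.
    exfalso; apply Hm; lra. }
  unfold Rabs. destruct (Rcase_abs (xa - y)), (Rcase_abs (xb - y)),
    (Rcase_abs (xa - y')), (Rcase_abs (xb - y')); split; intro; lra.
Qed.

Lemma closest_ext m x y y' j :
  (forall a b, (a < m)%nat -> (b < m)%nat ->
     (Defs.dist x a y <= Defs.dist x b y <-> Defs.dist x a y' <= Defs.dist x b y')) ->
  (j < m)%nat -> closest_b m x y j = closest_b m x y' j.
Proof.
  intros H Hj. apply Bool.eq_true_iff_eq. rewrite !closest_spec. split; intros Hc t Ht.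
  - apply H; auto. - apply H; auto.
Qed.

Lemma farthest_ext m x y y' j :
  (forall a b, (a < m)%nat -> (b < m)%nat ->
     (Defs.dist x a y <= Defs.dist x b y <-> Defs.dist x a y' <= Defs.dist x b y')) ->
  (j < m)%nat -> farthest_b m x y j = farthest_b m x y' j.
Proof.
  intros H Hj. apply Bool.eq_true_iff_eq. rewrite !farthest_spec. split; intros Hc t Ht.
  - apply H; auto. - apply H; auto.
Qed.

Lemma score_ext c m x y y' i :
  (forall a b, (a < m)%nat -> (b < m)%nat ->
     (Defs.dist x a y <= Defs.dist x b y <-> Defs.dist x a y' <= Defs.dist x b y')) ->
  (i < m)%nat -> score c m x i y = score c m x i y'.
Proof.
  intros H Hi. unfold score, n_closest, n_farthest.
  rewrite (closest_ext m x y y' i H Hi), (farthest_ext m x y y' i H Hi).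
  rewrite (filter_ext_in (closest_b m x y) (closest_b m x y')).
  2:{ intros a Ha. apply in_seq in Ha. apply closest_ext; auto; lia. }
  rewrite (filter_ext_in (farthest_b m x y) (farthest_b m x y')).
  2:{ intros a Ha. apply in_seq in Ha. apply farthest_ext; auto; lia. }
  reflexivity.
Qed.

Definition mids (m : nat) (x : nat -> R) : list R :=
  flat_map (fun a => map (fun b => (x a + x b)/2) (seq 0 m)) (seq 0 m).

Lemma score_integrable c m x i a b : (i < m)%nat -> a <= b ->
  Riemann_integrable (score c m x i) a b.
Proof.
  intros Hi Hab. apply (step_int _ (mids m x)); auto.
  intros u v _ Huv _ Hz y Hy. apply score_ext; auto.
  intros p q Hp Hq. unfold Defs.dist. apply cmp_const with u v; try lra.
  apply Hz. unfold mids. apply in_flat_map. exists p. split; [apply in_seq; lia|].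
  apply in_map_iff. exists q. split; auto. apply in_seq; lia.
Qed.


Definition bump (K eps z y : R) : R := if Rle_dec (Rabs (y - z)) eps then K else 0.

Fixpoint Esum (K eps : R) (B : list R) (y : R) : R :=
  match B with [] => 0 | z :: B' => bump K eps z y + Esum K eps B' y end.

Lemma bump_nonneg K eps z y : 0 <= K -> 0 <= bump K eps z y.
Proof. intros. unfold bump. destruct Rle_dec; lra. Qed.

Lemma Esum_nonneg K eps B y : 0 <= K -> 0 <= Esum K eps B y.
Proof. intros HK. induction B; simpl; [lra|]. pose proof (bump_nonneg K eps a y HK). lra. Qed.

Lemma Esum_ge K eps B y z : 0 <= K -> In z B -> Rabs (y - z) <= eps -> K <= Esum K eps B y.
Proof.
  intros HK. induction B as [|w B IH]; intros Hz Hy; [destruct Hz|].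
  simpl. destruct Hz as [<-|Hz].
  - unfold bump. destruct Rle_dec; [|lra]. pose proof (Esum_nonneg K eps B y HK). lra.
  - pose proof (bump_nonneg K eps w y HK). specialize (IH Hz Hy). lra.
Qed.

Lemma bump_const K eps z u v y y' :
  ~ (u < z - eps < v) -> ~ (u < z + eps < v) -> u < y < v -> u < y' < v ->
  bump K eps z y = bump K eps z y'.
Proof.
  intros H1 H2 Hy Hy'.
  assert (A1 : z - eps <= u \/ v <= z - eps).
  { destruct (Rle_or_lt (z - eps) u); auto. destruct (Rle_or_lt v (z-eps)); auto.
    exfalso; apply H1; lra. }
  assert (A2 : z + eps <= u \/ v <= z + eps).
  { destruct (Rle_or_lt (z + eps) u); auto. destruct (Rle_or_lt v (z+eps)); auto.
    exfalso; apply H2; lra. }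
  unfold bump. destruct (Rle_dec (Rabs (y - z)) eps) as [h|h], (Rle_dec (Rabs (y' - z)) eps) as [h'|h'];
    auto; exfalso; revert h h'; unfold Rabs; destruct (Rcase_abs (y - z)), (Rcase_abs (y'-z)); intros; lra.
Qed.

Lemma bump_integrable K eps z a b : a <= b -> Riemann_integrable (bump K eps z) a b.
Proof.
  intros Hab. apply (step_int _ [z - eps; z + eps]); auto.
  intros u v _ Huv _ Hz y Hy. apply bump_const with u v; try lra;
  apply Hz; simpl; auto.
Qed.

Lemma Esum_integrable K eps B a b : a <= b -> Riemann_integrable (Esum K eps B) a b.
Proof.
  intros Hab. induction B as [|z B IH]; simpl.
  - apply (step_int _ []); auto; intros; reflexivity.
  - apply (step_int _ (flat_map (fun w => [w - eps; w + eps]) (z :: B))); auto.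
    intros u v _ Huv _ Hz y Hy.
    assert (G : forall B', incl B' (z :: B) -> Esum K eps B' y = Esum K eps B' ((u+v)/2)).
    { induction B' as [|w B' IH']; intros Hi; simpl; auto.
      rewrite IH' by (intros q Hq; apply Hi; right; auto).
      f_equal. apply bump_const with u v; try lra;
      apply Hz; apply in_flat_map; exists w; (split; [apply Hi; left; auto|simpl; auto]). }
    exact (G (z :: B) (incl_refl _)).
Qed.

Lemma bump_int K eps z (pr : Riemann_integrable (bump K eps z) 0 1) :
  0 <= K -> 0 < eps -> RiemannInt pr <= 2 * eps * K.
Proof.
  intros HK He.
  set (a' := Rmax 0 (Rmin 1 (z - eps))).
  set (b' := Rmax a' (Rmin 1 (z + eps))).
  assert (Ha : 0 <= a' <= 1) by (unfold a', Rmax, Rmin; repeat destruct Rle_dec; lra).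
  assert (Hb : a' <= b' <= 1) by (unfold b', Rmax, Rmin in *; repeat destruct Rle_dec; lra).
  assert (Hd : b' - a' <= 2 * eps) by (unfold b', a', Rmax, Rmin; repeat destruct Rle_dec; lra).
  assert (L1 : forall y, 0 < y < a' -> bump K eps z y <= fct_cte 0 y).
  { intros y Hy. unfold fct_cte, bump. destruct Rle_dec as [h|h]; [|lra].
    exfalso. revert h. unfold a', Rmax, Rmin in Hy. unfold Rabs.
    repeat destruct Rle_dec; destruct Rcase_abs; intros; lra. }
  assert (L2 : forall y, a' < y < b' -> bump K eps z y <= fct_cte K y).
  { intros y Hy. unfold fct_cte, bump. destruct Rle_dec; lra. }
  assert (L3 : forall y, b' < y < 1 -> bump K eps z y <= fct_cte 0 y).
  { intros y Hy. unfold fct_cte, bump. destruct Rle_dec as [h|h]; [|lra].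
    exfalso. revert h. unfold b', a', Rmax, Rmin in Hy. unfold Rabs.
    repeat destruct Rle_dec; destruct Rcase_abs; intros; lra. }
  pose proof (bump_integrable K eps z 0 a' ltac:(lra)) as p1.
  pose proof (bump_integrable K eps z a' b' ltac:(lra)) as p2.
  pose proof (bump_integrable K eps z b' 1 ltac:(lra)) as p3.
  pose proof (bump_integrable K eps z a' 1 ltac:(lra)) as p23.
  rewrite <- (RiemannInt_P26 p1 p23 pr).
  rewrite <- (RiemannInt_P26 p2 p3 p23).
  pose proof (RiemannInt_P19 p1 (RiemannInt_P14 0 a' 0) ltac:(lra) L1).
  pose proof (RiemannInt_P19 p2 (RiemannInt_P14 a' b' K) ltac:(lra) L2).
  pose proof (RiemannInt_P19 p3 (RiemannInt_P14 b' 1 0) ltac:(lra) L3).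
  rewrite !RiemannInt_P15 in *. nra.
Qed.

Lemma Esum_int K eps B (pr : Riemann_integrable (Esum K eps B) 0 1) :
  0 <= K -> 0 < eps -> RiemannInt pr <= INR (length B) * (2 * eps * K).
Proof.
  intros HK He. revert pr. induction B as [|z B IH]; intros pr; simpl length.
  - pose proof (RiemannInt_P19 pr (RiemannInt_P14 0 1 0) ltac:(lra)
      (fun y _ => ltac:(unfold fct_cte; simpl; lra))).
    rewrite RiemannInt_P15 in H. simpl INR. lra.
  - pose proof (bump_integrable K eps z 0 1 ltac:(lra)) as p1.
    pose proof (Esum_integrable K eps B 0 1 ltac:(lra)) as p2.
    pose proof (RiemannInt_P10 1 p1 p2) as p3.
    pose proof (RiemannInt_P13 p1 p2 p3).
    pose proof (RiemannInt_P19 pr p3 ltac:(lra)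
      (fun y _ => ltac:(simpl; lra))).
    pose proof (bump_int K eps z p1 HK He). specialize (IH p2).
    rewrite S_INR. lra.
Qed.


Lemma margin (z p y eps : R) : 0 < eps -> 4 * eps < Rabs (z - p) ->
  eps < Rabs (y - (z + p)/2) ->
  Rabs (z - y) > Rabs (p - y) + 2 * eps \/ Rabs (z - y) < Rabs (p - y) - 2 * eps.
Proof.
  intros He H1 H2. revert H1 H2. unfold Rabs.
  destruct (Rcase_abs (z - p)), (Rcase_abs (y - (z+p)/2)), (Rcase_abs (z - y)), (Rcase_abs (p - y));
  intros; lra.
Qed.

Lemma upd_same x k q : update x k q k = q.
Proof. unfold update. destruct (Nat.eq_dec k k); congruence. Qed.
Lemma upd_other x k q t : t <> k -> update x k q t = x t.
Proof. intros. unfold update. destruct (Nat.eq_dec t k); congruence. Qed.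


Lemma toward0 (c : R) (m : nat) (x : nat -> R) (k l k' l' : nat) (eps y : R) (Hc : 0 <= c) (Hk : (k < m)%nat) (Hl : (l < m)%nat)
  (Hk' : (k' < m)%nat) (Hl' : (l' < m)%nat) (Hkk : k' <> k) (Hll : l' <> l)
  (Hxk' : x k' = x k) (Hxl' : x l' = x l) (Hkl : x k <> x l)
  (Hmult : mult m x (x l) = 2%nat) (He : 0 < eps) q : Rabs (q - y) < Rabs (x l - y) -> 0 <= score c m (update x k q) k y.
Proof.
  assert (lk : l <> k) by (intro; subst; apply Hkl; auto).
  intros Hq. apply score_ge0; auto. exists l. split; auto.
  unfold Defs.dist. rewrite upd_same, upd_other by apply lk. auto.
Qed.

Lemma toward1 (c : R) (m : nat) (x : nat -> R) (k l k' l' : nat) (eps y : R) (Hc : 0 <= c) (Hk : (k < m)%nat) (Hl : (l < m)%nat)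
  (Hk' : (k' < m)%nat) (Hl' : (l' < m)%nat) (Hkk : k' <> k) (Hll : l' <> l)
  (Hxk' : x k' = x k) (Hxl' : x l' = x l) (Hkl : x k <> x l)
  (Hmult : mult m x (x l) = 2%nat) (He : 0 < eps) q : Rabs (q - y) < Rabs (x l - y) ->
  (forall t, (t < m)%nat -> x t <> x l -> Rabs (x t - y) > Rabs (x l - y) + 2 * eps) ->
  1 <= score c m (update x k q) k y.
Proof.
  assert (lk : l <> k) by (intro; subst; apply Hkl; auto).
  intros Hq HA. apply score_ge1; auto.
  - intros t Ht Htk. unfold Defs.dist. rewrite upd_same, upd_other by auto.
    destruct (Req_EM_T (x t) (x l)) as [e|n].
    + rewrite e. auto.
    + specialize (HA t Ht n). lra.
  - exists l. split; auto.
    unfold Defs.dist. rewrite upd_same, upd_other by apply lk. auto.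
Qed.

Lemma away0 (c : R) (m : nat) (x : nat -> R) (k l k' l' : nat) (eps y : R) (Hc : 0 <= c) (Hk : (k < m)%nat) (Hl : (l < m)%nat)
  (Hk' : (k' < m)%nat) (Hl' : (l' < m)%nat) (Hkk : k' <> k) (Hll : l' <> l)
  (Hxk' : x k' = x k) (Hxl' : x l' = x l) (Hkl : x k <> x l)
  (Hmult : mult m x (x l) = 2%nat) (He : 0 < eps) q : Rabs (q - y) <= Rabs (x l - y) + eps ->
  (exists t, (t < m)%nat /\ x t <> x l /\ Rabs (x t - y) > Rabs (x l - y) + 2 * eps) ->
  0 <= score c m (update x k q) k y.
Proof.
  intros Hq [t [Ht [Hn Hd]]]. apply score_ge0; auto.
  destruct (Nat.eq_dec t k) as [->|Htk].
  - exists k'. split; auto. unfold Defs.dist. rewrite upd_same, upd_other by auto.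
    rewrite Hxk'. lra.
  - exists t. split; auto. unfold Defs.dist. rewrite upd_same, upd_other by auto. lra.
Qed.

Lemma pw_gen (c : R) (m : nat) (x : nat -> R) (k l k' l' : nat) (eps y : R) (Hc : 0 <= c) (Hk : (k < m)%nat) (Hl : (l < m)%nat)
  (Hk' : (k' < m)%nat) (Hl' : (l' < m)%nat) (Hkk : k' <> k) (Hll : l' <> l)
  (Hxk' : x k' = x k) (Hxl' : x l' = x l) (Hkl : x k <> x l)
  (Hmult : mult m x (x l) = 2%nat) (He : 0 < eps) qT qW :
  (forall t, (t < m)%nat -> 4 * eps < Rabs (x t - x l) \/ x t = x l) ->
  (forall t, (t < m)%nat -> eps < Rabs (y - (x t + x l)/2)) ->
  Rabs (qT - y) < Rabs (x l - y) -> Rabs (qW - y) <= Rabs (x l - y) + eps ->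
  2 * score c m x l y <= score c m (update x k qT) k y + score c m (update x k qW) k y /\
  score c m x l y <= score c m (update x k qT) k y.
Proof.
  set (p := x l) in *.
  set (A := forall t, (t < m)%nat -> x t <> p -> Rabs (x t - y) > Rabs (p - y) + 2 * eps).
  set (W := exists t, (t < m)%nat /\ x t <> p /\ Rabs (x t - y) > Rabs (p - y) + 2 * eps).
  intros G1 Gy HqT HqW.
  assert (Mg : forall t, (t < m)%nat -> x t <> p ->
     Rabs (x t - y) > Rabs (p - y) + 2 * eps \/ Rabs (x t - y) < Rabs (p - y) - 2 * eps).
  { intros t Ht Hn. apply margin; auto. destruct (G1 t Ht); auto. congruence. }
  pose proof (toward0 c m x k l k' l' eps y Hc Hk Hl Hk' Hl' Hkk Hll Hxk' Hxl' Hkl Hmult He qT HqT) as T0.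
  pose proof (score_gec c m (update x k qW) y k Hc Hk) as W0.
  destruct (classic A) as [HA|HA].
  - pose proof (toward1 c m x k l k' l' eps y Hc Hk Hl Hk' Hl' Hkk Hll Hxk' Hxl' Hkl Hmult He qT HqT HA) as T1.
    assert (W1 : 0 <= score c m (update x k qW) k y).
    { apply (away0 c m x k l k' l' eps y Hc Hk Hl Hk' Hl' Hkk Hll Hxk' Hxl' Hkl Hmult He qW HqW).
      exists k. split; [auto|split; [exact Hkl|apply HA; [auto|exact Hkl]]]. }
    assert (S : score c m x l y <= / 2).
    { apply (score_le_half c m x y l l'); auto. apply closest_spec. intros t Ht.
      unfold Defs.dist. destruct (Req_EM_T (x t) p) as [e|n].
      - fold p. rewrite e. lra.
      - specialize (HA t Ht n). fold p. lra. }
    lra.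
  - assert (Ex : exists t, (t < m)%nat /\ x t <> p /\ Rabs (x t - y) < Rabs (p - y) - 2 * eps).
    { apply NNPP. intro Hn. apply HA. intros t Ht Hxt.
      destruct (Mg t Ht Hxt); auto. exfalso; apply Hn; exists t; auto. }
    destruct Ex as [t0 [Ht0 [Hn0 Hd0]]].
    assert (S0 : score c m x l y <= 0).
    { apply score_le0; auto. exists t0. split; auto. unfold Defs.dist. fold p. lra. }
    destruct (classic W) as [HW|HW].
    + pose proof (away0 c m x k l k' l' eps y Hc Hk Hl Hk' Hl' Hkk Hll Hxk' Hxl' Hkl Hmult He qW HqW HW). lra.
    + assert (S1 : score c m x l y <= - c / 2).
      { apply score_le_mhalf; auto.
        - exists t0. split; auto. unfold Defs.dist. fold p. lra.
        - intros t Ht Hxt. unfold Defs.dist.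
          destruct (Mg t Ht Hxt); [|fold p; lra].
          exfalso; apply HW; exists t; auto. }
      lra.
Qed.


Lemma gap_exists (x : nat -> R) (p : R) m :
  exists e, 0 < e /\ forall t, (t < m)%nat -> x t <> p -> e < Rabs (x t - p).
Proof.
  induction m as [|m [e [He H]]].
  - exists 1. split; [lra|]. intros; lia.
  - destruct (Req_EM_T (x m) p) as [E|N].
    + exists e. split; auto. intros t Ht Hn. destruct (Nat.eq_dec t m) as [->|]; [congruence|].
      apply H; auto; lia.
    + assert (0 < Rabs (x m - p)) by (apply Rabs_pos_lt; lra).
      exists (Rmin e (Rabs (x m - p) / 2)). split.
      * apply Rmin_glb_lt; lra.
      * intros t Ht Hn. destruct (Nat.eq_dec t m) as [->|].
        -- pose proof (Rmin_r e (Rabs (x m - p) / 2)). lra.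
        -- pose proof (Rmin_l e (Rabs (x m - p) / 2)). specialize (H t ltac:(lia) Hn). lra.
Qed.

Lemma step_bound c m x k l k' l' eps :
  0 <= c -> (k < m)%nat -> (l < m)%nat -> (k' < m)%nat -> (l' < m)%nat ->
  k' <> k -> l' <> l -> x k' = x k -> x l' = x l -> x k <> x l ->
  mult m x (x l) = 2%nat -> 0 < eps ->
  0 <= x l <= 1 ->
  (forall t, (t < m)%nat -> x t <> x l -> 4 * eps < Rabs (x t - x l)) ->
  (0 < x l -> eps <= x l) -> (x l < 1 -> eps <= 1 - x l) ->
  (forall t, 0 <= t <= 1 -> v c m (update x k t) k <= v c m x k) ->
  v c m x l <= v c m x k + INR m * eps * (2 + 2 * c).
Proof.
  intros Hc Hk Hl Hk' Hl' Hkk Hll Hxk' Hxl' Hkl Hmult He Hp G1 Gp1 Gp2 Nash.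
  set (p := x l) in *.
  set (d1 := if Rlt_dec 0 p then p - eps else p + eps).
  set (d2 := if Rlt_dec p 1 then p + eps else p - eps).
  set (K := 2 + 2 * c).
  set (B := map (fun t => (x t + p)/2) (seq 0 m)).
  assert (Hd1 : 0 <= d1 <= 1) by (unfold d1; destruct (Rlt_dec 0 p) as [h|h]; [specialize (Gp1 h); lra|]; assert (h' : p < 1) by lra; specialize (Gp2 h'); lra).
  assert (Hd2 : 0 <= d2 <= 1) by (unfold d2; destruct (Rlt_dec p 1) as [h|h]; [specialize (Gp2 h); lra|]; assert (h' : 0 < p) by lra; specialize (Gp1 h'); lra).
  pose proof (score_integrable c m x l 0 1 Hl ltac:(lra)) as ps.
  pose proof (score_integrable c m (update x k d1) k 0 1 Hk ltac:(lra)) as p1.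
  pose proof (score_integrable c m (update x k d2) k 0 1 Hk ltac:(lra)) as p2.
  pose proof (Esum_integrable K eps B 0 1 ltac:(lra)) as pE.
  pose proof (RiemannInt_P10 1 ps ps) as pss.
  pose proof (RiemannInt_P10 1 p2 pE) as p2E.
  pose proof (RiemannInt_P10 1 p1 p2E) as p12E.
  assert (PW : forall y, 0 < y < 1 ->
     score c m x l y + 1 * score c m x l y <=
     score c m (update x k d1) k y + 1 * (score c m (update x k d2) k y + 1 * Esum K eps B y)).
  { intros y Hy.
    destruct (classic (exists t, (t < m)%nat /\ Rabs (y - (x t + p)/2) <= eps)) as [[t [Ht Hyt]]|Hn].
    - assert (K <= Esum K eps B y).
      { apply Esum_ge with ((x t + p)/2); auto. unfold K; lra.
        unfold B. apply in_map_iff. exists t. split; auto. apply in_seq; lia. }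
      pose proof (score_le1 c m x y l Hc Hl).
      pose proof (score_gec c m (update x k d1) y k Hc Hk).
      pose proof (score_gec c m (update x k d2) y k Hc Hk).
      unfold K in *. lra.
    - assert (Gy : forall t, (t < m)%nat -> eps < Rabs (y - (x t + p)/2)).
      { intros t Ht. apply Rnot_le_lt. intro. apply Hn. exists t; auto. }
      assert (G1' : forall t, (t < m)%nat -> 4 * eps < Rabs (x t - p) \/ x t = p).
      { intros t Ht. destruct (Req_EM_T (x t) p); auto. }
      pose proof (Esum_nonneg K eps B y ltac:(unfold K; lra)).
      assert (Hyp : eps < Rabs (y - p)).
      { specialize (Gy l Hl). fold p in Gy. replace ((p + p)/2) with p in Gy by field. exact Gy. }
      pose proof (pw_gen c m x k l k' l' eps y Hc Hk Hl Hk' Hl' Hkk Hll Hxk' Hxl' Hkl Hmult He) as PG.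
      fold p in PG.
      assert (Up : Rabs (p + eps - y) < Rabs (p - y) /\ Rabs (p - eps - y) <= Rabs (p - y) + eps
                 \/ Rabs (p - eps - y) < Rabs (p - y) /\ Rabs (p + eps - y) <= Rabs (p - y) + eps).
      { destruct (Rle_or_lt y p); [right|left]; split; revert Hyp; unfold Rabs; repeat destruct Rcase_abs; intros; lra. }
      unfold d1, d2. destruct (Rlt_dec 0 p), (Rlt_dec p 1).
      + destruct Up as [[U1 U2]|[U1 U2]].
        * destruct (PG (p + eps) (p - eps) G1' Gy U1 U2). lra.
        * destruct (PG (p - eps) (p + eps) G1' Gy U1 U2). lra.
      + assert (y < p) by lra.
        assert (U1 : Rabs (p - eps - y) < Rabs (p - y)) by (revert Hyp; unfold Rabs; repeat destruct Rcase_abs; intros; lra).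
        assert (U2 : Rabs (p + eps - y) <= Rabs (p - y) + eps) by (revert Hyp; unfold Rabs; repeat destruct Rcase_abs; intros; lra).
        destruct (PG (p - eps) (p + eps) G1' Gy U1 U2). lra.
      + assert (p < y) by lra.
        assert (U1 : Rabs (p + eps - y) < Rabs (p - y)) by (revert Hyp; unfold Rabs; repeat destruct Rcase_abs; intros; lra).
        assert (U2 : Rabs (p - eps - y) <= Rabs (p - y) + eps) by (revert Hyp; unfold Rabs; repeat destruct Rcase_abs; intros; lra).
        destruct (PG (p + eps) (p - eps) G1' Gy U1 U2). lra.
      + lra. }
  pose proof (RiemannInt_P19 pss p12E ltac:(lra) PW) as I.
  rewrite (RiemannInt_P13 ps ps pss), (RiemannInt_P13 p1 p2E p12E), (RiemannInt_P13 p2 pE p2E) in I.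
  pose proof (Esum_int K eps B pE ltac:(unfold K; lra) He) as IE.
  assert (LB : length B = m) by (unfold B; rewrite length_map, length_seq; auto). rewrite LB in IE.
  pose proof (Nash d1 Hd1) as N1. pose proof (Nash d2 Hd2) as N2.
  unfold v in *. rewrite (integral01_eq _ ps). rewrite (integral01_eq _ p1) in N1.
  rewrite (integral01_eq _ p2) in N2. fold K. replace (INR m * (2 * eps * K)) with (2 * (INR m * eps * K)) in IE by ring. assert (A2: RiemannInt ps + RiemannInt ps <= 2* integral01 (score c m x k) + RiemannInt pE) by lra. set (Q := INR m * eps * K) in *. lra.
Qed.


Lemma half c m x k l : 0 <= c -> nash_eq c m x -> (k < m)%nat -> (l < m)%nat ->
  x k <> x l -> mult m x (x k) = 2%nat -> mult m x (x l) = 2%nat ->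
  v c m x l <= v c m x k.
Proof.
  intros Hc [Hprof Nash] Hk Hl Hkl Hmk Hml.
  destruct (partner m x (x k) k Hmk Hk eq_refl) as [k' [Hk' [Hkk Hxk']]].
  destruct (partner m x (x l) l Hml Hl eq_refl) as [l' [Hl' [Hll Hxl']]].
  destruct (gap_exists x (x l) m) as [e [He G]].
  pose proof (Hprof l Hl) as Hp.
  apply Rnot_lt_le. intro Hlt.
  set (delta := v c m x l - v c m x k).
  set (K := 2 + 2 * c).
  set (a1 := if Rlt_dec 0 (x l) then x l else 1).
  set (a2 := if Rlt_dec (x l) 1 then 1 - x l else 1).
  assert (Ha1 : 0 < a1) by (unfold a1; destruct (Rlt_dec 0 (x l)); lra).
  assert (Ha2 : 0 < a2) by (unfold a2; destruct (Rlt_dec (x l) 1); lra).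
  assert (HK : 0 < K) by (unfold K; lra).
  assert (HM : 0 < INR m + 1) by (pose proof (pos_INR m); lra).
  set (d := delta / (2 * (INR m + 1) * K)).
  assert (Hd : 0 < d) by (unfold d, delta; apply Rdiv_lt_0_compat; [lra|]; apply Rmult_lt_0_compat; lra).
  set (eps := Rmin (Rmin (e / 8) a1) (Rmin a2 d)).
  assert (E1 : eps <= e / 8) by (unfold eps; eapply Rle_trans; [apply Rmin_l|apply Rmin_l]).
  assert (E2 : eps <= a1) by (unfold eps; eapply Rle_trans; [apply Rmin_l|apply Rmin_r]).
  assert (E3 : eps <= a2) by (unfold eps; eapply Rle_trans; [apply Rmin_r|apply Rmin_l]).
  assert (E4 : eps <= d) by (unfold eps; eapply Rle_trans; [apply Rmin_r|apply Rmin_r]).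
  assert (E0 : 0 < eps) by (unfold eps; repeat apply Rmin_glb_lt; lra).
  assert (SB := step_bound c m x k l k' l' eps Hc Hk Hl Hk' Hl' Hkk Hll Hxk' Hxl' Hkl Hml E0 Hp).
  assert (B : v c m x l <= v c m x k + INR m * eps * K).
  { apply SB.
    - intros t Ht Hn. specialize (G t Ht Hn). lra.
    - intros h. unfold a1 in E2. destruct (Rlt_dec 0 (x l)); [lra|contradiction].
    - intros h. unfold a2 in E3. destruct (Rlt_dec (x l) 1); [lra|contradiction].
    - intros t Ht. apply Nash; auto. }
  assert (INR m * eps * K <= INR m * d * K).
  { apply Rmult_le_compat_r; [lra|]. apply Rmult_le_compat_l; [apply pos_INR|lra]. }
  assert (INR m * d * K < delta).
  { unfold d. replace (INR m * (delta / (2 * (INR m + 1) * K)) * K) with (delta * (INR m / (2 * (INR m + 1)))) by (field; lra).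
    assert (r : INR m / (2*(INR m+1)) < 1).
    { apply Rmult_lt_reg_r with (2*(INR m+1)); [lra|]. unfold Rdiv. rewrite Rmult_assoc, Rinv_l by lra.
      pose proof (pos_INR m); lra. }
    assert (0 < delta) by (unfold delta; lra).
    assert (0 <= INR m / (2 * (INR m + 1))) by (apply Rmult_le_pos; [apply pos_INR|left; apply Rinv_0_lt_compat; lra]).
    nra. }
  unfold delta in *. lra.
Qed.

Theorem lemma3 (c : R) (m : nat) (x : nat -> R) (k l : nat) :
  0 <= c -> (2 <= m)%nat ->
  nash_eq c m x -> non_convergent m x ->
  (k < m)%nat -> (l < m)%nat ->
  mult m x (x k) = 2%nat -> mult m x (x l) = 2%nat ->
  v c m x k = v c m x l.
Proof.
  intros Hc Hm HN _ Hk Hl Hmk Hml.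
  destruct (Req_EM_T (x k) (x l)) as [e|n].
  - unfold v. f_equal. apply functional_extensionality. intro y.
    unfold score, closest_b, farthest_b, Defs.dist. rewrite e. reflexivity.
  - apply Rle_antisym.
    + apply half; auto.
    + apply half; auto.
Qed.
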